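(* Let $G$ be a finite Abelian group with identity $1$ and let $A=\{a_1,\ldots,a_t\}$ be a set of generators of $G$ satisfying the triangular relations $$a_1^{k_1}=1,\qquad a_i^{k_i}=a_1^{\lambda_{i,1}}\cdots a_{i-1}^{\lambda_{i,i-1}}\quad (i=2,\ldots,t),$$ where the $\lambda_{i,j}$ are nonnegative integers and, for every $i\in[t]$, $k_i\ge 2$ is the smallest positive integer such that $a_i^{k_i}\in\langle a_1,\ldots,a_{i-1}\rangle$ (for $i=1$ this subgroup is $\{1\}$). Then $G$ is isomorphic to $\Gamma(K,L)$, where $K=(k_i)$ and $L=(\lambda_{i,j})$, via the isomorphism $$\Psi(x_1^{j_1}\cdots x_t^{j_t})=a_1^{j_1}\cdots a_t^{j_t}\qquad (0\le j_i\le k_i-1,\ i\in[t]).$$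
   Context: For positive integers $k_1,\ldots,k_t$ and nonnegative integers $\lambda_{i,j}$ ($2\le i\le t$, $1\le j<i$), let $I$ be the ideal of $\mathbb{R}[x_1,\ldots,x_t]$ generated by $x_1^{k_1}-1$ and $x_i^{k_i}-x_1^{\lambda_{i,1}}\cdots x_{i-1}^{\lambda_{i,i-1}}$ ($i=2,\ldots,t$). The monomial group $\Gamma(K,L)$ is the set of residue classes in $\mathbb{R}[x_1,\ldots,x_t]/I$ of the monomials $x_1^{j_1}\cdots x_t^{j_t}$ with $0\le j_i\le k_i-1$, with the multiplication of the quotient ring (products are reduced to this form using the relations $x_1^{k_1}=1$, $x_i^{k_i}=x_1^{\lambda_{i,1}}\cdots x_{i-1}^{\lambda_{i,i-1}}$). *)

(* Defs.v *)
From HB Require Import structures.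
From mathcomp Require Import all_boot all_order all_algebra all_fingroup.
From mathcomp Require Import reals.
From mathcomp Require Import mpoly.

Set Implicit Arguments.
Unset Strict Implicit.
Unset Printing Implicit Defensive.

Import GRing.Theory.
Local Open Scope ring_scope.

(* Exponent vectors are functions j : 'I_t -> nat; index i : 'I_t stands for
   the paper's index i+1.  The box  0 <= j_i <= k_i - 1. *)
Definition in_box (t : nat) (k : 'I_t -> nat) (j : 'I_t -> nat) : Prop :=
  forall i, (j i < k i)%N.

Definition mono (R : comNzRingType) (t : nat) (j : 'I_t -> nat) : {mpoly R[t]} :=
  \prod_(i < t) 'X_i ^+ j i.

Definition gen_poly (R : comNzRingType) (t : nat) (k : 'I_t -> nat)
    (lam : 'I_t -> 'I_t -> nat) (i : 'I_t) : {mpoly R[t]} :=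
  'X_i ^+ k i - \prod_(j < t | (j < i)%N) 'X_j ^+ lam i j.

Definition in_ideal (R : comNzRingType) (t : nat) (k : 'I_t -> nat)
    (lam : 'I_t -> 'I_t -> nat) (p : {mpoly R[t]}) : Prop :=
  exists c : 'I_t -> {mpoly R[t]}, p = \sum_(i < t) c i * gen_poly R k lam i.

Definition Psi (gT : finGroupType) (t : nat) (a : 'I_t -> gT)
    (j : 'I_t -> nat) : gT :=
  (\prod_(i < t) a i ^+ j i)%g.

(* Main.v *)
Require Import Defs.
From HB Require Import structures.
From mathcomp Require Import all_boot all_order all_algebra all_fingroup.
From mathcomp Require Import reals.
From mathcomp Require Import mpoly.
From mathcomp Require Import zify.

Set Implicit Arguments.
Unset Strict Implicit.
Unset Printing Implicit Defensive.
Import GRing.Theory.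
Section Aux.
Local Open Scope ring_scope.

Definition ellw (R : comNzRingType) (t : nat) (w : 'X_{1..t} -> R) (p : {mpoly R[t]}) : R :=
  \sum_(m <- msupp p) p@_m * w m.

Lemma ell_seq (R : comNzRingType) (t : nat) (w : 'X_{1..t} -> R) (p : {mpoly R[t]}) s :
  uniq s -> {subset msupp p <= s} -> ellw w p = \sum_(m <- s) p@_m * w m.
Proof.
move=> us sub; rewrite (bigID (fun m => m \in msupp p)) /=.
rewrite [X in _ + X]big1 ?addr0; last first.
  by move=> m /memN_msupp_eq0 ->; rewrite mul0r.
rewrite -big_filter /ellw; apply: perm_big.
apply: uniq_perm; [exact: msupp_uniq | exact: filter_uniq |].
by move=> m; rewrite mem_filter; case h: (m \in msupp p) => //=; rewrite sub.
Qed.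

Lemma ellB (R : comNzRingType) (t : nat) (w : 'X_{1..t} -> R) (p q : {mpoly R[t]}) :
  ellw w (p - q) = ellw w p - ellw w q.
Proof.
set s := undup (msupp p ++ msupp q ++ msupp (p - q)).
have us : uniq s by exact: undup_uniq.
have h1 : {subset msupp p <= s} by move=> m hm; rewrite mem_undup !mem_cat hm.
have h2 : {subset msupp q <= s} by move=> m hm; rewrite mem_undup !mem_cat hm orbT.
have h3 : {subset msupp (p - q) <= s} by move=> m hm; rewrite mem_undup !mem_cat hm !orbT.
rewrite (ell_seq w us h1) (ell_seq w us h2) (ell_seq w us h3) -sumrB.
by apply: eq_bigr => m _; rewrite mcoeffB mulrBl.
Qed.

Lemma ellZ (R : comNzRingType) (t : nat) (w : 'X_{1..t} -> R) c (p : {mpoly R[t]}) :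
  ellw w (c *: p) = c * ellw w p.
Proof.
set s := undup (msupp p ++ msupp (c *: p)).
have us : uniq s by exact: undup_uniq.
have h1 : {subset msupp p <= s} by move=> m hm; rewrite mem_undup !mem_cat hm.
have h2 : {subset msupp (c *: p) <= s} by move=> m hm; rewrite mem_undup !mem_cat hm orbT.
rewrite (ell_seq w us h1) (ell_seq w us h2) mulr_sumr.
by apply: eq_bigr => m _; rewrite mcoeffZ mulrA.
Qed.

Lemma ell0 (R : comNzRingType) (t : nat) (w : 'X_{1..t} -> R) :
  ellw w 0 = 0.
Proof. by rewrite /ellw msupp0 big_nil. Qed.

Lemma ellD (R : comNzRingType) (t : nat) (w : 'X_{1..t} -> R) (p q : {mpoly R[t]}) :
  ellw w (p + q) = ellw w p + ellw w q.
Proof.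
have hN : ellw w (- q) = - ellw w q by rewrite -sub0r ellB ell0 sub0r.
by rewrite -[q in LHS]opprK ellB hN opprK.
Qed.

Lemma ell_sum (R : comNzRingType) (t : nat) (w : 'X_{1..t} -> R) I (r : seq I)
  (F : I -> {mpoly R[t]}) :
  ellw w (\sum_(x <- r) F x) = \sum_(x <- r) ellw w (F x).
Proof.
elim: r => [|x r IH]; first by rewrite !big_nil ell0.
by rewrite !big_cons ellD IH.
Qed.

Lemma ellX (R : comNzRingType) (t : nat) (w : 'X_{1..t} -> R) m :
  ellw w 'X_[m] = w m.
Proof. by rewrite /ellw msuppX big_seq1 mcoeffX eqxx mul1r. Qed.

Lemma ell_ideal (R : comNzRingType) (t : nat) (w : 'X_{1..t} -> R) (q : {mpoly R[t]}) :
  (forall m, ellw w ('X_[m] * q) = 0) -> forall c, ellw w (c * q) = 0.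
Proof.
move=> h c; rewrite [c]mpolyE mulr_suml ell_sum big1 // => m _.
by rewrite -scalerAl ellZ h mulr0.
Qed.
End Aux.
Lemma prod_split (gT : finGroupType) (G : {group gT}) (I : Type) (r : seq I)
  (P Q : pred I) (F : I -> gT) :
  abelian G -> (forall x, F x \in G) ->
  (\prod_(x <- r | P x) F x = (\prod_(x <- r | P x && Q x) F x) *
     (\prod_(x <- r | P x && ~~ Q x) F x))%g.
Proof.
move=> hA hF; elim: r => [|x r IH]; first by rewrite !big_nil mulg1.
rewrite !big_cons; case: (P x); case: (Q x) => /=; rewrite IH ?mulgA //.
have hc : commute (F x) (\prod_(y <- r | P y && Q y) F y).
  by apply: (centsP hA); [exact: hF | apply: group_prod => y _; exact: hF].
by rewrite hc.
Qed.

Lemma prodM (gT : finGroupType) (G : {group gT}) (I : Type) (r : seq I)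
  (P : pred I) (F F' : I -> gT) :
  abelian G -> (forall x, F x \in G) -> (forall x, F' x \in G) ->
  (\prod_(x <- r | P x) (F x * F' x) = (\prod_(x <- r | P x) F x) *
     (\prod_(x <- r | P x) F' x))%g.
Proof.
move=> hA hF hF'; elim: r => [|x r IH]; first by rewrite !big_nil mulg1.
rewrite !big_cons; case: (P x) => //; rewrite IH.
have hc : commute (F' x) (\prod_(y <- r | P y) F y).
  by apply: (centsP hA); [exact: hF' | apply: group_prod => y _; exact: hF].
by rewrite -!mulgA; congr (_ * _)%g; rewrite !mulgA hc.
Qed.

Lemma prod_pred1 (gT : finGroupType) (t : nat) (i : 'I_t) (F : 'I_t -> gT) :
  (\prod_(l < t | l == i) F l = F i)%g.
Proof. exact: big_pred1_eq. Qed.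

Lemma psi_split (gT : finGroupType) (G : {group gT}) (t : nat) (a : 'I_t -> gT)
  (j : 'I_t -> nat) (Q : pred 'I_t) :
  abelian G -> (forall i, a i \in G) ->
  Psi a j = (\prod_(l < t | Q l) a l ^+ j l * \prod_(l < t | ~~ Q l) a l ^+ j l)%g.
Proof.
move=> hA aG; rewrite /Psi (@prod_split _ G _ _ xpredT Q _ hA) //.
by move=> x; rewrite groupX.
Qed.

Lemma psiM (gT : finGroupType) (G : {group gT}) (t : nat) (a : 'I_t -> gT)
  (j j' : 'I_t -> nat) :
  abelian G -> (forall i, a i \in G) ->
  Psi a (fun i => j i + j' i)%N = (Psi a j * Psi a j')%g.
Proof.
move=> hA aG; rewrite /Psi -(@prodM _ G _ _ xpredT _ _ hA) => [|x|x]; try by rewrite groupX.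
by apply: eq_bigr => i _; rewrite expgD.
Qed.

Section Part4.
Local Open Scope ring_scope.

Lemma monoE (R : comNzRingType) (t : nat) (j : 'I_t -> nat) :
  mono R j = 'X_[[multinom j i | i < t]].
Proof. by rewrite /mono mpolyXE_id; apply: eq_bigr => i _; rewrite mnmE. Qed.

Lemma part4 (R : comNzRingType) (gT : finGroupType) (G : {group gT})
    (t : nat) (a : 'I_t -> gT) (k : 'I_t -> nat) (lam : 'I_t -> 'I_t -> nat) :
  abelian G -> (forall i, a i \in G) ->
  (forall i : 'I_t, (a i ^+ k i)%g = (\prod_(j < t | (j < i)%N) a j ^+ lam i j)%g) ->
  forall j j' j'' : 'I_t -> nat,
  in_ideal k lam (mono R (fun i => (j i + j' i)%N) - mono R j'') ->
  Psi a j'' = (Psi a j * Psi a j')%g.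
Proof.
move=> hA aG hrel j j' j'' [c hc].
pose ps (m : 'X_{1..t}) := Psi a (fun i => m i).
have psE : forall E : 'I_t -> nat, ps [multinom E i | i < t] = Psi a E.
  by move=> E; rewrite /ps /Psi; apply: eq_bigr => i _; rewrite mnmE.
have psD : forall m1 m2, ps (m1 + m2)%MM = (ps m1 * ps m2)%g.
  move=> m1 m2; rewrite /ps -(psiM _ _ hA aG); rewrite /Psi.
  by apply: eq_bigr => i _; rewrite mnmDE.
pose w (m : 'X_{1..t}) : R := (ps m == Psi a j'')%:R.
have hgen : forall i m, ellw w ('X_[m] * gen_poly R k lam i) = 0.
  move=> i m; rewrite /gen_poly mpolyXn.
  pose lv := [multinom (if (l < i)%N then lam i l else 0%N) | l < t].
  have -> : \prod_(l < t | (l < i)%N) 'X_l ^+ lam i l = 'X_[lv] :> {mpoly R[t]}.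
    rewrite mpolyXE_id big_mkcond; apply: eq_bigr => l _; rewrite mnmE.
    by case: ifP => // _; rewrite expr0.
  rewrite mulrBr -!mpolyXD ellB !ellX /w psD psD.
  suff -> : ps (U_(i) *+ k i)%MM = ps lv by rewrite subrr.
  rewrite psE.
  have -> : Psi a (fun l => if (l < i)%N then lam i l else 0%N) =
      (\prod_(l < t | (l < i)%N) a l ^+ lam i l)%g.
    by rewrite /Psi [in RHS]big_mkcond; apply: eq_bigr => l _; case: ifP.
  rewrite -hrel /ps (psi_split _ (fun l => l == i) hA aG).
  rewrite big_pred1_eq mulmnE mnm1E eqxx mul1n big1 ?mulg1 // => l hl.
  by rewrite mulmnE mnm1E eq_sym (negbTE hl) mul0n expg0.
have := congr1 (ellw w) hc.
rewrite ell_sum big1 => [|i _]; last exact: ell_ideal.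
rewrite !monoE ellB !ellX /w !psE eqxx.
case: eqP => [e _|_]; first by rewrite -e (psiM _ _ hA aG).
by move/eqP; rewrite sub0r oppr_eq0 oner_eq0.
Qed.
End Part4.

Theorem mainTheorem3 (R : realType) (gT : finGroupType) (G : {group gT})
    (t : nat) (a : 'I_t -> gT) (k : 'I_t -> nat) (lam : 'I_t -> 'I_t -> nat) :
  abelian G ->
  <<[set a i | i : 'I_t]>>%g = G ->
  (forall i : 'I_t, (a i ^+ k i)%g = (\prod_(j < t | (j < i)%N) a j ^+ lam i j)%g) ->
  (forall i : 'I_t, (2 <= k i)%N) ->
  (forall (i : 'I_t) (m : nat), (0 < m < k i)%N ->
      (a i ^+ m)%g \notin <<[set a j | j : 'I_t & (j < i)%N]>>%g) ->
  [/\ (forall j, in_box k j -> Psi a j \in G),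
      (forall j j', in_box k j -> in_box k j' -> Psi a j = Psi a j' -> j =1 j'),
      (forall g, g \in G -> exists2 j, in_box k j & Psi a j = g)
    & (forall j j' j'', in_box k j -> in_box k j' -> in_box k j'' ->
        in_ideal k lam
          (mono R (fun i => (j i + j' i)%N) - mono R j'')%R ->
        Psi a j'' = (Psi a j * Psi a j')%g)].
Proof.
move=> hA hgen hrel hk hmin.
have aG : forall i, a i \in G.
  by move=> i; rewrite -hgen mem_gen // imset_f.
have PsiG : forall j, Psi a j \in G.
  by move=> j; apply: group_prod => i _; rewrite groupX.
pose H n := <<[set a j | j : 'I_t & (j < n)%N]>>%g.
have HG : forall n, H n \subset G.
  move=> n; rewrite gen_subG; apply/subsetP => x /imsetP [l _ ->]; exact: aG.
have aH : forall n (l : 'I_t), (l < n)%N -> a l \in H n.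
  by move=> n l hl; rewrite mem_gen // imset_f // inE.
have prodH : forall n (e : 'I_t -> nat),
    (\prod_(l < t | (l < n)%N) a l ^+ e l)%g \in H n.
  by move=> n e; apply: group_prod => l hl; rewrite groupX // aH.
split.
- by move=> j _.
- move=> j j' hj hj' heq.
  suff: forall n, (forall l : 'I_t, (n <= l)%N -> j l = j' l) -> j =1 j'.
    by move/(_ t); apply => l; rewrite leqNgt ltn_ord.
  elim=> [|n IH] hag; first by move=> l; apply: hag.
  case: (ltnP n t) => hn; last first.
    apply: IH => l hl; apply: hag; have := ltn_ord l; lia.
  pose i := Ordinal hn.
  have key : forall u v X Y, X \in H n -> Y \in H n -> (u < k i)%N -> (v <= u)%N ->
      (X * a i ^+ u = Y * a i ^+ v)%g -> u = v.
    move=> u v X Y hX hY hu hvu e.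
    apply/eqP; apply: contraT => hne.
    have hm : (0 < u - v < k i)%N by lia.
    case/negP: (hmin i (u - v) hm).
    change ((a i ^+ (u - v))%g \in H n).
    have -> : (a i ^+ (u - v) = X^-1 * Y)%g.
      apply: (mulIg (a i ^+ v)%g); rewrite -expgD subnK // -mulgA -e mulKg //.
    by rewrite groupM ?groupV.
  have hle : forall e : 'I_t -> nat,
      (\prod_(l < t | (l <= n)%N) a l ^+ e l =
       \prod_(l < t | (l < n)%N) a l ^+ e l * a i ^+ e i)%g.
    move=> e; rewrite (@prod_split _ G _ _ (fun l : 'I_t => (l <= n)%N)
      (fun l : 'I_t => (l < n)%N)) //; last by move=> x; rewrite groupX.
    congr (_ * _)%g; first by apply: eq_bigl => l; lia.
    rewrite (@eq_bigl _ _ _ _ _ _ (fun l : 'I_t => l == i)) ?big_pred1_eq // => l; rewrite -val_eqE /=; lia.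
  have hi : j i = j' i.
    move: heq; rewrite (psi_split j (fun l : 'I_t => (l <= n)%N) hA aG).
    rewrite (psi_split j' (fun l : 'I_t => (l <= n)%N) hA aG).
    have -> : (\prod_(l < t | ~~ (l <= n)%N) a l ^+ j l =
               \prod_(l < t | ~~ (l <= n)%N) a l ^+ j' l)%g.
      by apply: eq_bigr => l hl; rewrite hag //; lia.
    move/mulIg; rewrite !hle => e.
    case: (leqP (j' i) (j i)) => h.
      by apply: (key _ _ _ _ (prodH n j) (prodH n j')) => //; apply: hj.
    apply/esym; apply: (key _ _ _ _ (prodH n j') (prodH n j)) => //.
    exact: ltnW.
  apply: IH => l hl; case: (boolP (l == i)) => [/eqP -> // | hne].
  apply: hag; move: hne; rewrite -val_eqE /=; lia.
- have hk0 : forall i, (0 < k i)%N by move=> i; have := hk i; lia.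
  suff: forall n g, g \in H n -> exists2 j, in_box k j &
      (forall l : 'I_t, (n <= l)%N -> j l = 0%N) /\ Psi a j = g.
    move=> hs g hg.
    have [|j hj [_ e]] := hs t g; last by exists j.
    rewrite /H; suff -> : [set a j | j : 'I_t & (j < t)%N] = [set a i | i : 'I_t].
      by rewrite hgen.
    apply/setP => x; apply/imsetP/imsetP => [[l _ ->]|[l _ ->]]; exists l => //.
    by rewrite inE.
  elim=> [|n IH] g.
    rewrite /H; have -> : [set a j | j : 'I_t & (j < 0)%N] = set0.
      by apply/setP => x; rewrite inE; apply/imsetP => [[l]]; rewrite inE.
    rewrite gen0 => /set1P ->; exists (fun _ => 0%N) => //.
    split => //; rewrite /Psi big1 // => i _; exact: expg0.
  case: (ltnP n t) => hn; last first.
    have -> : H n.+1 = H n.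
      rewrite /H; congr <<_>>%g; apply/setP => x.
      apply/imsetP/imsetP => [[l hl ->]|[l hl ->]]; exists l => //;
        move: hl; rewrite !inE; have := ltn_ord l; lia.
    move/IH => [j hj [hz e]]; exists j => //; split => // l hl; apply: hz; lia.
  pose i := Ordinal hn.
  have eS : [set a j | j : 'I_t & (j < n.+1)%N] =
            [set a i] :|: [set a j | j : 'I_t & (j < n)%N].
    apply/setP => x; rewrite !inE; apply/imsetP/orP.
      move=> [l hl ->]; move: hl; rewrite inE ltnS leq_eqVlt => /orP [hl|hl].
        by left; rewrite (_ : l = i) //; apply: val_inj; apply/eqP.
      by right; apply/imsetP; exists l => //; rewrite inE.
    move=> [/eqP ->|/imsetP [l hl ->]]; first by exists i => //; rewrite inE /=.
    by exists l => //; move: hl; rewrite !inE => /ltnW.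
  have eH : H n.+1 = (<[a i]> * H n)%g.
    rewrite /H eS -joingE -joing_idl -joing_idr -/(H n) comm_joingE //.
    apply: centC; apply: (centSS _ (HG n) hA).
    by rewrite cycle_subG aG.
  rewrite eH => /mulsgP [x y /cycleP [e ->] hy ->].
  have hki := hk0 i.
  have hy' : ((a i ^+ k i) ^+ (e %/ k i) * y)%g \in H n.
    by rewrite groupM // groupX // hrel prodH.
  have [j hj [hz ej]] := IH _ hy'.
  pose j' := fun l : 'I_t => if l == i then (e %% k i)%N else j l.
  exists j'.
    by move=> l; rewrite /j'; case: ifP => [/eqP ->|_]; [rewrite ltn_mod | exact: hj].
  split.
    move=> l hl; rewrite /j'; case: ifP => [/eqP el|_]; last by apply: hz; lia.
    by move: hl; rewrite el /=; lia.
  rewrite (psi_split j' (fun l => l == i) hA aG).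
  have -> : (\prod_(l < t | ~~ (l == i)) a l ^+ j' l =
             \prod_(l < t | ~~ (l == i)) a l ^+ j l)%g.
    by apply: eq_bigr => l /negbTE hl; rewrite /j' hl.
  have -> : (\prod_(l < t | ~~ (l == i)) a l ^+ j l = Psi a j)%g.
    by rewrite (psi_split j (fun l => l == i) hA aG) big_pred1_eq hz //= mul1g.
  rewrite big_pred1_eq /j' eqxx ej.
  rewrite [in RHS](divn_eq e (k i)) expgD mulnC expgM.
  have hc : commute (a i ^+ (e %% k i)) ((a i ^+ k i) ^+ (e %/ k i))%g.
    by apply: (centsP hA); rewrite ?groupX ?aG.
  by rewrite (mulgA (a i ^+ (e %% k i))%g) hc.
- by move=> j j' j'' _ _ _; apply: (part4 hA aG hrel).
Qed.
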